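(* Let $\mathcal N':=\mathbb N\cup\{-1\}$ (with $\mathbb N=\{0,1,2,\dots\}$) and let $H=(\mathcal N',\mathcal N',p_1,p_2)$ be the two-player game with, for $k,\ell\ge 0$: $p_1(k,\ell)=\ell+1$ if $k=\ell+1$ and $0$ otherwise; $p_2(k,\ell)=k$ if $k=\ell$ and $0$ otherwise; and, for $k,\ell\ge -1$ and $k_0,\ell_0\ge 0$: $p_1(-1,\ell)=\ell+1$, $p_1(k_0,-1)=k_0$, $p_2(k,-1)=k$, $p_2(-1,\ell_0)=\ell_0$. With the pure belief structure, $\overline{GR}^{\omega}=(\{-1\},\{-1\})$ and $\overline{GR}^{\omega+1}=(\emptyset,\emptyset)$, so the closure ordinal of $\overline{GR}$ is $\omega+1$ and its outcome is $(\emptyset,\emptyset)$. Moreover $\overline{LR}^{\omega}=(\{-1\},\{-1\})$ and this is a fixpoint of $\overline{LR}$, so the outcome of $\overline{LR}$ is $(\{-1\},\{-1\})$.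
   Context: Restrictions of $H$ are pairs $(S_1,S_2)$ with $S_i\subseteq\mathcal N'$, ordered componentwise. Pure belief structure: the beliefs of player $i$ in a restriction $G=(S_1,S_2)$ are the strategies of the opponent in $G$, i.e. $S_{-i}$, and the expected payoff is the payoff. For $G=(S_1,S_2)$ and an opponent strategy $\mu_i$, $s_i\in BR_G(\mu_i)$ iff $p_i(s_i,\mu_i)\ge p_i(s_i',\mu_i)$ for all $s_i'\in S_i$. $GR(G)_i:=\{s_i\in\mathcal N'\mid\exists\mu_i\in S_{-i}: s_i\in BR_H(\mu_i)\}$; $LR(G)_i:=\{s_i\in\mathcal N'\mid\exists\mu_i\in S_{-i}: s_i\in BR_G(\mu_i)\}$; $\overline{T}(G):=T(G)\cap G$. Iterations: $T^0:=H$, $T^{\alpha+1}:=T(T^\alpha)$, $T^\beta:=\bigcap_{\alpha<\beta}T^\alpha$ for limit $\beta$; the closure ordinal is the least $\alpha$ with $T^{\alpha+1}=T^\alpha$ and the outcome is the corresponding iterate. *)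

(* Defs.v *)
From Stdlib Require Import ZArith.
Open Scope Z_scope.

Inductive Np : Type := Neg1 | Nat (n : nat).

Definition val (s : Np) : Z :=
  match s with Neg1 => -1 | Nat n => Z.of_nat n end.

Definition p1 (k l : Np) : Z :=
  match k, l with
  | Neg1, _ => val l + 1
  | Nat k0, Neg1 => Z.of_nat k0
  | Nat k0, Nat l0 => if Nat.eqb k0 (S l0) then Z.of_nat l0 + 1 else 0
  end.

Definition p2 (k l : Np) : Z :=
  match k, l with
  | _, Neg1 => val k
  | Neg1, Nat l0 => Z.of_nat l0
  | Nat k0, Nat l0 => if Nat.eqb k0 l0 then Z.of_nat k0 else 0
  end.

Definition restr : Type := ((Np -> Prop) * (Np -> Prop))%type.
Definition H : restr := (fun _ => True, fun _ => True).

(* best responses in a restriction G (pure beliefs: opponent strategy mu) *)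
Definition BR1 (G : restr) (mu s : Np) : Prop :=
  forall s', fst G s' -> p1 s' mu <= p1 s mu.
Definition BR2 (G : restr) (mu s : Np) : Prop :=
  forall s', snd G s' -> p2 mu s' <= p2 mu s.

Definition GR (G : restr) : restr :=
  (fun s => exists mu, snd G mu /\ BR1 H mu s,
   fun s => exists mu, fst G mu /\ BR2 H mu s).
Definition LR (G : restr) : restr :=
  (fun s => exists mu, snd G mu /\ BR1 G mu s,
   fun s => exists mu, fst G mu /\ BR2 G mu s).

Definition bar (T : restr -> restr) (G : restr) : restr :=
  (fun s => fst (T G) s /\ fst G s, fun s => snd (T G) s /\ snd G s).

Fixpoint iterF (T : restr -> restr) (n : nat) : restr :=
  match n with O => H | S m => T (iterF T m) end.
Definition iterOmega (T : restr -> restr) : restr :=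
  (fun s => forall n, fst (iterF T n) s, fun s => forall n, snd (iterF T n) s).
Fixpoint iterOmegaPlus (T : restr -> restr) (k : nat) : restr :=
  match k with O => iterOmega T | S m => T (iterOmegaPlus T m) end.

Definition singNeg1 : restr := (fun s => s = Neg1, fun s => s = Neg1).
Definition emptyR : restr := (fun _ => False, fun _ => False).

(* Main.v *)
Require Import Defs.
From Stdlib Require Import ZArith.
From Stdlib Require Import Lia Arith FunctionalExtensionality PropExtensionality.

Lemma restr_eq (G G' : restr) :
  (forall s, fst G s <-> fst G' s) -> (forall s, snd G s <-> snd G' s) -> G = G'.
Proof.
  destruct G as [a b], G' as [c d]; simpl; intros H1 H2.
  f_equal; extensionality s; apply propositional_extensionality; auto.
Qed.

Definition q (s : Np) : nat := match s with Neg1 => 0%nat | Nat k => k end.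

Lemma p1_bound s' l0 : p1 s' (Nat l0) <= Z.of_nat l0 + 1.
Proof. destruct s'; simpl; [lia| destruct Nat.eqb; lia]. Qed.

Lemma p2_bound s' k0 : p2 (Nat k0) s' <= Z.of_nat k0.
Proof. destruct s'; simpl; [lia| destruct (Nat.eqb_spec k0 n); lia]. Qed.

Lemma p2_nonneg s' k0 : 0 <= p2 (Nat k0) s'.
Proof. destruct s'; simpl; [lia| destruct (Nat.eqb_spec k0 n); lia]. Qed.

Definition unb (P : Np -> Prop) := forall N, exists m, (N <= m)%nat /\ P (Nat m).

Lemma BR1_char G l s : fst G Neg1 -> unb (fst G) ->
  (BR1 G l s <-> exists l0, l = Nat l0 /\ (s = Neg1 \/ s = Nat (S l0))).
Proof.
  intros H1 Hu; split.
  - intro HB. destruct l as [|l0].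
    + exfalso. destruct (Hu (q s + 1)%nat) as [m [Hm Hin]].
      specialize (HB _ Hin). destruct s; simpl in *; lia.
    + exists l0; split; auto. specialize (HB Neg1 H1). simpl in HB.
      destruct s as [|k]; auto. simpl in HB.
      destruct (Nat.eqb_spec k (S l0)); [right; subst; auto | lia].
  - intros [l0 [-> Hs]] s' _. pose proof (p1_bound s' l0).
    destruct Hs as [->| ->]; simpl; [lia|]. rewrite Nat.eqb_refl. lia.
Qed.

Lemma BR2_char G k s : snd G Neg1 -> unb (snd G) ->
  (BR2 G k s <-> exists k0, k = Nat k0 /\ (k0 = 0%nat \/ s = Neg1 \/ s = Nat k0)).
Proof.
  intros H1 Hu; split.
  - intro HB. destruct k as [|k0].
    + exfalso. destruct (Hu (q s + 1)%nat) as [m [Hm Hin]].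
      specialize (HB _ Hin). destruct s; simpl in *; lia.
    + exists k0; split; auto. specialize (HB Neg1 H1). simpl in HB.
      destruct s as [|l]; auto. simpl in HB.
      destruct (Nat.eqb_spec k0 l); [right; right; subst; auto | left; lia].
  - intros [k0 [-> Hs]] s' _. pose proof (p2_bound s' k0).
    destruct Hs as [->|[->| ->]].
    + pose proof (p2_nonneg s 0). lia.
    + assert (E : p2 (Nat k0) Neg1 = Z.of_nat k0) by reflexivity. rewrite E. lia.
    + assert (E : p2 (Nat k0) (Nat k0) = Z.of_nat k0) by (simpl; rewrite Nat.eqb_refl; reflexivity). rewrite E. lia.
Qed.

Definition A (n : nat) : restr :=
  (fun s => s = Neg1 \/ exists m, s = Nat m /\ (n <= 2*m)%nat,
   fun s => s = Neg1 \/ exists m, s = Nat m /\ (n <= 2*m+1)%nat).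

Lemma A1 n : fst (A n) Neg1. Proof. left; auto. Qed.
Lemma A2 n : snd (A n) Neg1. Proof. left; auto. Qed.
Lemma Au1 n : unb (fst (A n)).
Proof. intro N. exists (N+n)%nat. split; [lia|]. right. exists (N+n)%nat. split; auto; lia. Qed.
Lemma Au2 n : unb (snd (A n)).
Proof. intro N. exists (N+n)%nat. split; [lia|]. right. exists (N+n)%nat. split; auto; lia. Qed.
Lemma Hu1 : unb (fst H). Proof. intro N. exists N. split; simpl; auto. Qed.
Lemma Hu2 : unb (snd H). Proof. intro N. exists N. split; simpl; auto. Qed.

Lemma step1 n (B : restr) s : fst B Neg1 -> unb (fst B) ->
  ((exists mu, snd (A n) mu /\ BR1 B mu s) /\ fst (A n) s <-> fst (A (S n)) s).
Proof.
  intros HB1 HBu. split.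
  - intros [[mu [Hmu HBR]] Hs]. apply BR1_char in HBR; auto.
    destruct HBR as [l0 [-> Hs']].
    destruct Hmu as [Hc|[m [Hm Hle]]]; [discriminate|]. injection Hm as <-.
    simpl. destruct Hs' as [->| ->]; [left; auto| right; exists (S l0); split; auto; lia].
  - intros Hs. split.
    + destruct Hs as [->|[m [-> Hm]]].
      * exists (Nat n). split; [right; exists n; split; auto; lia|].
        apply BR1_char; auto. exists n; auto.
      * exists (Nat (m-1)). split; [right; exists (m-1)%nat; split; auto; lia|].
        apply BR1_char; auto. exists (m-1)%nat. split; auto.
        right. f_equal. lia.
    + destruct Hs as [->|[m [-> Hm]]]; [left; auto| right; exists m; split; auto; lia].
Qed.

Lemma step2 n (B : restr) s : snd B Neg1 -> unb (snd B) ->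
  ((exists mu, fst (A n) mu /\ BR2 B mu s) /\ snd (A n) s <-> snd (A (S n)) s).
Proof.
  intros HB1 HBu. split.
  - intros [[mu [Hmu HBR]] Hs]. apply BR2_char in HBR; auto.
    destruct HBR as [k0 [-> Hs']].
    destruct Hmu as [Hc|[m [Hm Hle]]]; [discriminate|]. injection Hm as <-.
    simpl. destruct Hs as [->|[m [-> Hm]]]; [left; auto|].
    right. exists m. split; auto.
    destruct Hs' as [->|[Hc| Hc]]; [lia|discriminate|injection Hc; lia].
  - intros Hs. split.
    + destruct Hs as [->|[m [-> Hm]]].
      * exists (Nat n). split; [right; exists n; split; auto; lia|].
        apply BR2_char; auto. exists n; auto.
      * exists (Nat m). split; [right; exists m; split; auto; lia|].
        apply BR2_char; auto. exists m. auto.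
    + destruct Hs as [->|[m [-> Hm]]]; [left; auto| right; exists m; split; auto; lia].
Qed.

Lemma A0 : A 0 = H.
Proof.
  apply restr_eq; intro s; simpl; split; auto; intros _;
  destruct s; [left; auto| right; exists n; split; auto; lia|left; auto|right; exists n; split; auto; lia].
Qed.

Lemma iterGR n : iterF (bar GR) n = A n.
Proof.
  induction n; simpl; [symmetry; apply A0|]. rewrite IHn.
  apply restr_eq; intro s.
  - apply (step1 n H s I Hu1).
  - apply (step2 n H s I Hu2).
Qed.

Lemma iterLR n : iterF (bar LR) n = A n.
Proof.
  induction n; simpl; [symmetry; apply A0|]. rewrite IHn.
  apply restr_eq; intro s.
  - apply (step1 n (A n) s (A1 n) (Au1 n)).
  - apply (step2 n (A n) s (A2 n) (Au2 n)).
Qed.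

Lemma omegaA T : (forall n, iterF T n = A n) -> iterOmega T = singNeg1.
Proof.
  intro HT. unfold iterOmega. apply restr_eq; intro s; simpl; split.
  - intro Hs. specialize (Hs (2*q s + 2)%nat). rewrite HT in Hs.
    destruct Hs as [->|[m [-> Hm]]]; auto. simpl in Hm. lia.
  - intros -> n. rewrite HT. left; auto.
  - intro Hs. specialize (Hs (2*q s + 2)%nat). rewrite HT in Hs.
    destruct Hs as [->|[m [-> Hm]]]; auto. simpl in Hm. lia.
  - intros -> n. rewrite HT. left; auto.
Qed.

Lemma GR_sing : bar GR singNeg1 = emptyR.
Proof.
  apply restr_eq; intro s; simpl; split; try tauto.
  - intros [[mu [-> HB]] _]. apply BR1_char in HB; [|exact I|exact Hu1].
    destruct HB as [l0 [Hc _]]; discriminate.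
  - intros [[mu [-> HB]] _]. apply BR2_char in HB; [|exact I|exact Hu2].
    destruct HB as [l0 [Hc _]]; discriminate.
Qed.

Theorem mainTheorem13 :
  (* GR-bar: omega-th iterate, (omega+1)-th iterate *)
  iterOmega (bar GR) = singNeg1 /\
  iterOmegaPlus (bar GR) 1 = emptyR /\
  (* closure ordinal of GR-bar is omega+1: no earlier fixpoint, fixpoint at omega+1 *)
  (forall n : nat, iterF (bar GR) (S n) <> iterF (bar GR) n) /\
  iterOmegaPlus (bar GR) 1 <> iterOmega (bar GR) /\
  iterOmegaPlus (bar GR) 2 = iterOmegaPlus (bar GR) 1 /\
  (* LR-bar *)
  iterOmega (bar LR) = singNeg1 /\
  bar LR (iterOmega (bar LR)) = iterOmega (bar LR).
Proof.
  assert (HG : iterOmega (bar GR) = singNeg1) by (apply omegaA; apply iterGR).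
  assert (HL : iterOmega (bar LR) = singNeg1) by (apply omegaA; apply iterLR).
  assert (H1 : iterOmegaPlus (bar GR) 1 = emptyR) by (simpl; rewrite HG; apply GR_sing).
  split; [exact HG|]. split; [exact H1|]. split.
  { intros n E. rewrite !iterGR in E.
    destruct (Nat.Even_or_Odd n) as [[j Hj]|[j Hj]].
    - assert (X := f_equal (fun G => fst G (Nat j)) E).
      assert (Y : fst (A n) (Nat j))
        by (right; exists j; split; auto; lia).
      rewrite <- X in Y. simpl in Y. destruct Y as [Y|[m [Y Hm]]]; [discriminate|].
      injection Y as <-. lia.
    - assert (X := f_equal (fun G => snd G (Nat j)) E).
      assert (Y : snd (A n) (Nat j))
        by (right; exists j; split; auto; lia).
      rewrite <- X in Y. simpl in Y. destruct Y as [Y|[m [Y Hm]]]; [discriminate|].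
      injection Y as <-. lia. }
  split.
  { rewrite H1, HG. intro E. assert (X := f_equal (fun G => fst G Neg1) E).
    simpl in X. rewrite X. auto. }
  split.
  { change (bar GR (iterOmegaPlus (bar GR) 1) = iterOmegaPlus (bar GR) 1).
    rewrite H1. apply restr_eq; intro s; simpl; tauto. }
  split; [exact HL|].
  rewrite HL. apply restr_eq; intro s; simpl; split; try tauto.
  - intros ->. split; auto. exists Neg1. split; auto. intros s' ->. lia.
  - intros ->. split; auto. exists Neg1. split; auto. intros s' ->. lia.
Qed.
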